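(* Let $\mathbb{F}$ be a field, $n\ge1$ and $k\ge2$. The maps $\mathcal{F}\mapsto\varphi(\mathcal{F})$ and $S\mapsto\psi(S)$ are mutually inverse bijections between the set of all flags in $\mathbb{F}^n$ of length $k$ and the set of all $k$-maximal nilpotent subsemigroups of $M(n,\mathbb{F})$.
   Context: $M(n,\mathbb{F})$ is the semigroup of $n\times n$ matrices over $\mathbb{F}$, identified with linear operators on $\mathbb{F}^n$. A flag of length $k$ is a chain $0=V_0\subsetneq V_1\subsetneq\cdots\subsetneq V_k=\mathbb{F}^n$ of subspaces; $\varphi(\mathcal{F})=\{a\in M(n,\mathbb{F}) : a(V_i)\subseteq V_{i-1}\ \forall i\}$. A semigroup $S$ with zero is nilpotent of nilpotency degree $k$ if all products of $k$ elements vanish and some product of $k-1$ elements does not. For a nilpotent subsemigroup $S$ of nilpotency degree $k$, with $S^i(\mathbb{F}^n)=\{a_1\cdots a_i(v): a_j\in S, v\in\mathbb{F}^n\}$ and $\langle\cdot\rangle$ the linear span, $\psi(S)$ is the flag $0\subset\langle S^{k-1}(\mathbb{F}^n)\rangle\subset\cdots\subset\langle S(\mathbb{F}^n)\rangle\subset\mathbb{F}^n$. A nilpotent subsemigroup of nilpotency degree $k$ is $k$-maximal if it is not properly contained in another nilpotent subsemigroup of $M(n,\mathbb{F})$ of nilpotency degree $k$. *)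

(* Defs.v *)
From HB Require Import structures.
From mathcomp Require Import all_boot all_order all_algebra.
From Stdlib Require Import ClassicalEpsilon.
Set Implicit Arguments. Unset Strict Implicit. Unset Printing Implicit Defensive.
Import GRing.Theory.
Local Open Scope ring_scope.

(* F^n is the space of column vectors 'cV[F]_n; a matrix a acts as v |-> a *m v,
   so that the matrix product corresponds to composition of operators. *)
Section Defs.
Variables (F : fieldType) (n : nat).

Notation vec := 'cV[F]_n.
Notation mat := 'M[F]_n.

Definition mset := mat -> Prop.

Definition mprod (s : seq mat) : mat := foldr (fun a b => a *m b) 1%:M s.

Definition subsemigroup (S : mset) : Prop :=
  forall a b, S a -> S b -> S (a *m b).

Definition nilpotent_of_degree (S : mset) (k : nat) : Prop :=
  [/\ subsemigroup S,
      (forall s : seq mat, size s = k -> {in s, forall a, S a} -> mprod s = 0)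
    & (exists s : seq mat, [/\ size s = k.-1, {in s, forall a, S a} & mprod s != 0])].

Definition k_maximal (S : mset) (k : nat) : Prop :=
  nilpotent_of_degree S k /\
  (forall T : mset, nilpotent_of_degree T k -> (forall a, S a -> T a) ->
     forall a, T a -> S a).

Definition flagT (k : nat) := {ffun 'I_k.+1 -> {vspace vec}}.

Definition fl (k : nat) (f : flagT k) (i : nat) : {vspace vec} := f (inord i).

Definition is_flag (k : nat) (f : flagT k) : Prop :=
  [/\ fl f 0 = 0%VS, fl f k = fullv &
      forall i : nat, (i < k)%N -> (fl f i <= fl f i.+1)%VS /\ ~~ (fl f i.+1 <= fl f i)%VS].

Definition phi (k : nat) (f : flagT k) : mset :=
  fun a => forall i, (1 <= i <= k)%N ->
    forall v : vec, v \in fl f i -> a *m v \in fl f i.-1.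

Definition Spow (S : mset) (i : nat) : vec -> Prop :=
  fun v => exists (s : seq mat) (w : vec),
    [/\ size s = i, {in s, forall a, S a} & v = mprod s *m w].

Definition is_span (X : vec -> Prop) (V : {vspace vec}) : Prop :=
  (forall v, X v -> v \in V) /\
  (forall W : {vspace vec}, (forall v, X v -> v \in W) -> (V <= W)%VS).

Definition span_of (X : vec -> Prop) : {vspace vec} :=
  epsilon (inhabits 0%VS) (is_span X).

Definition psi (k : nat) (S : mset) : flagT k :=
  [ffun j : 'I_k.+1 =>
     if (j == 0 :> nat) then 0%VS
     else if (j == k :> nat) then fullv
     else span_of (Spow S (k - j))].

End Defs.

(* Main.v *)
Require Import Defs.
From HB Require Import structures.
From mathcomp Require Import all_boot all_order all_algebra.
From mathcomp Require Import zify.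
From Stdlib Require Import ClassicalEpsilon Classical FunctionalExtensionality PropExtensionality.
Set Implicit Arguments. Unset Strict Implicit. Unset Printing Implicit Defensive.
Import GRing.Theory.
Local Open Scope ring_scope.

Section Proofs.
Variables (F : fieldType) (n : nat).
Local Notation vec := 'cV[F]_n.
Local Notation mat := 'M[F]_n.

Lemma mprod_cat (s t : seq mat) : mprod (s ++ t) = mprod s *m mprod t.
Proof. by elim: s => [|a s IH] /=; rewrite ?mul1mx // IH mulmxA. Qed.

Lemma mx0_of_cols (A : mat) : (forall v : vec, A *m v = 0) -> A = 0.
Proof.
move=> H; apply/matrixP => i j; have := H (delta_mx j 0).
by rewrite -colE => /matrixP/(_ i 0); rewrite !mxE.
Qed.

Lemma row_of_fun (g : vec -> F) :
  (forall c y z, g (c *: y + z) = c * g y + g z) ->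
  exists r : 'rV[F]_n, forall y, r *m y = (g y)%:M.
Proof.
move=> Hg.
have g0 : g 0 = 0.
  have := Hg 1 0 0; rewrite scaler0 addr0 mul1r.
  by move/(congr1 (fun x => x - g 0)); rewrite subrr addrK => <-.
have gsum : forall (c : 'I_n -> F) (e : 'I_n -> vec),
    g (\sum_j c j *: e j) = \sum_j c j * g (e j).
  move=> c e; elim/big_rec2: _ => [|j x y _ <-]; first exact: g0.
  by rewrite Hg.
exists (\row_j g (delta_mx j 0)) => y.
apply/matrixP => i l; rewrite (ord1 i) (ord1 l) !mxE eqxx mulr1n.
have -> : y = \sum_j y j 0 *: delta_mx j 0.
  rewrite [LHS]matrix_sum_delta; apply: eq_bigr => j _.
  by rewrite big_ord1.
rewrite gsum; apply: eq_bigr => j _; rewrite !mxE.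
rewrite summxE mulrC; congr (_ * _).
rewrite (bigD1 j) //= !mxE eqxx /= mulr1 big1 ?addr0 // => m /negbTE mj.
by rewrite !mxE eq_sym mj mulr0.
Qed.


Lemma functional (U : {vspace vec}) (x : vec) : x \notin U ->
  exists g : vec -> F, [/\ (forall c y z, g (c *: y + z) = c * g y + g z),
     g x = 1 & forall u, u \in U -> g u = 0].
Proof.
move=> hx.
pose X := cons_tuple x (vbasis U).
have freeX : free X.
  by rewrite /= free_cons (span_basis (vbasisP U)) hx (basis_free (vbasisP U)).
have UV : (U <= <<X>>)%VS by rewrite /= span_cons (span_basis (vbasisP U)) addvSr.
exists (fun y => coord X ord0 (projv <<X>> y)); split.
- by move=> c y z; rewrite linearD linearZ /= linearD linearZ.
- rewrite projv_id; last by apply: memv_span; rewrite /= mem_head.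
  by have := coord_free ord0 ord0 freeX; rewrite eqxx.
- move=> u hu; rewrite projv_id; last by apply: (subvP UV).
  rewrite (coord_vbasis hu) linear_sum big1 // => i _.
  rewrite linearZ /=.
  have -> : (vbasis U)`_i = X`_(lift ord0 i) by rewrite lift0.
  by rewrite coord_free // eq_sym (negbTE (neq_lift _ _)) mulr0.
Qed.

Lemma fl_mono k (f : flagT F n k) : is_flag f ->
  forall i j, (i <= j)%N -> (j <= k)%N -> (fl f i <= fl f j)%VS.
Proof.
move=> [_ _ hs] i j; elim: j => [|j IH] ij jk.
  by rewrite leqn0 in ij; rewrite (eqP ij) subvv.
rewrite leq_eqVlt in ij; case/orP: ij => [/eqP -> | ij]; first exact: subvv.
exact: subv_trans (IH ij (ltnW jk)) (hs j jk).1.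
Qed.

Lemma fl_strict k (f : flagT F n k) : is_flag f ->
  forall i, (i < k)%N -> exists z, z \in fl f i.+1 /\ z \notin fl f i.
Proof.
move=> [_ _ hs] i ik; have [_ ns] := hs i ik.
apply: NNPP => H; move/negP: ns; apply; apply/subvP => z hz.
case: (boolP (z \in fl f i)) => // hz'; exfalso; apply: H; by exists z.
Qed.

Lemma rank_one k (f : flagT F n k) : is_flag f -> forall p x w,
  (p <= k)%N -> x \notin fl f p -> w \in fl f p -> exists a : mat, phi f a /\ a *m x = w.
Proof.
move=> hf p x w hp hx hw.
have [g [glin gx gU]] := functional hx.
have [r Hr] := row_of_fun glin.
exists (w *m r); split; last by rewrite -mulmxA Hr gx mulmx1.
move=> i /andP [i1 ik] v hv; rewrite -mulmxA Hr mul_mx_scalar.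
case: (leqP i p) => hip.
  by rewrite gU ?scale0r ?mem0v //; apply: (subvP (fl_mono hf hip hp)).
apply: memvZ; apply: (subvP (fl_mono hf _ _)) hw; lia.
Qed.

Section Spow.
Variable S : mset F n.

Lemma Spow_sub (T : mset F n) i v : (forall a, S a -> T a) -> Spow S i v -> Spow T i v.
Proof.
move=> sub [s [w [sz hs ->]]]; exists s, w; split => // b hb; exact: sub (hs b hb).
Qed.

Lemma Spow_cons a i y : S a -> Spow S i y -> Spow S i.+1 (a *m y).
Proof.
move=> ha [s [w [sz hs ->]]]; exists (a :: s), w; split => /=.
- by rewrite sz.
- by move=> b; rewrite in_cons => /orP [/eqP -> // | ]; exact: hs.
- by rewrite mulmxA.
Qed.

Lemma Spow_uncons i v : Spow S i.+1 v -> exists a y, [/\ S a, Spow S i y & v = a *m y].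
Proof.
move=> [[|a s] [w [sz hs ->]]] //.
exists a, (mprod s *m w); split.
- by apply: hs; rewrite mem_head.
- exists s, w; split => //; first by case: sz.
  by move=> b hb; apply: hs; rewrite in_cons hb orbT.
- by rewrite /= mulmxA.
Qed.

Lemma Spow_le i j v : (i <= j)%N -> Spow S j v -> Spow S i v.
Proof.
move=> ij [s [w [sz hs ->]]]; exists (take i s), (mprod (drop i s) *m w); split.
- by rewrite size_takel // sz.
- by move=> b hb; apply: hs; apply: mem_take hb.
- by rewrite mulmxA -mprod_cat cat_take_drop.
Qed.

Lemma Spow0 v : Spow S 0 v.
Proof. by exists [::], v; split => //; rewrite /= mul1mx. Qed.

End Spow.

Lemma span_ofE (X : vec -> Prop) V : is_span X V -> span_of X = V.
Proof.
move=> hV.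
have hS : is_span X (span_of X) :=
  epsilon_spec (inhabits 0%VS) (is_span X) (ex_intro _ V hV).
apply/subv_anti; rewrite (hS.2 V hV.1); exact: hV.2 _ hS.1.
Qed.

Section PartA.
Variables (k : nat) (hk : (2 <= k)%N) (f : flagT F n k) (hf : is_flag f).

Lemma phi_stable a i v : phi f a -> (i <= k)%N -> v \in fl f i -> a *m v \in fl f i.
Proof.
move=> ha; case: i => [|i] ik hv.
  have [h0 _ _] := hf; move: hv; rewrite h0 memv0 => /eqP ->.
  by rewrite mulmx0 mem0v.
have := ha i.+1 ik v hv; apply: (subvP (fl_mono hf (leqnSn i) ik)).
Qed.

Lemma phi_prod (s : seq mat) : {in s, forall a, phi f a} ->
  forall i v, (size s <= i)%N -> (i <= k)%N -> v \in fl f i ->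
  mprod s *m v \in fl f (i - size s).
Proof.
elim: s => [|a s IH] hs i v si ik hv /=.
  by rewrite mul1mx subn0.
rewrite -mulmxA.
have hs' : {in s, forall a, phi f a} by move=> b hb; apply: hs; rewrite in_cons hb orbT.
have := IH hs' i v (ltnW si) ik hv.
have ha : phi f a by apply: hs; rewrite mem_head.
have si2 : (size s < i)%N := si.
move/(ha (i - size s)%N) => /=; rewrite subnS; apply; apply/andP; split; lia.
Qed.

Lemma phi_chain t : forall j v, (j + t = k)%N -> v \in fl f j -> Spow (phi f) t v.
Proof.
elim: t => [|t IH] j v jt hv; first exact: Spow0.
have jk : (j < k)%N by lia.
have [u [hu1 hu2]] := fl_strict hf jk.
have [a [ha hau]] := rank_one hf (ltnW jk) hu2 hv.
rewrite -hau; apply: Spow_cons ha _; apply: IH hu1; lia.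
Qed.

Lemma phi_nil : nilpotent_of_degree (phi f) k.
Proof.
split.
- move=> a b ha hb i hi v hv; rewrite -mulmxA.
  apply: phi_stable ha _ (hb i hi v hv); lia.
- move=> s sz hs; apply: mx0_of_cols => v.
  have [h0 h1 _] := hf.
  have := phi_prod hs (i:=k) (v:=v); rewrite sz subnn leqnn h1 memvf h0 memv0.
  by move=> /(_ isT isT isT) /eqP.
- have k0 : (0 < k)%N by lia.
  have [z [hz1 hz2]] := fl_strict hf k0.
  have e1 : (1 + k.-1 = k)%N by lia.
  have [s [w [sz hs ez]]] := phi_chain (t := k.-1) (j := 1) (v := z) e1 hz1.
  exists s; split => //; apply/eqP => e; move: hz2; rewrite ez e mul0mx mem0v //.
Qed.

Lemma phi_max (T : mset F n) : nilpotent_of_degree T k -> (forall a, phi f a -> T a) ->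
  forall a, T a -> phi f a.
Proof.
move=> [_ Tnil _] sub.
have claim : forall t, (t <= k)%N -> forall x, Spow T (k - t) x -> x \in fl f t.
  elim => [|t IH] tk x hx.
    rewrite subn0 in hx; have [s [w [sz hs ->]]] := hx.
    by rewrite Tnil // mul0mx mem0v.
  case: (boolP (x \in fl f t.+1)) => // hxn; exfalso.
  have [z [hz1 hz2]] := fl_strict hf tk.
  have [a [ha haz]] := rank_one hf tk hxn hz1.
  have : Spow T (k - t) z.
    rewrite -haz; have -> : (k - t = (k - t.+1).+1)%N by lia.
    exact: Spow_cons (sub _ ha) hx.
  by move/(IH (ltnW tk)); rewrite (negbTE hz2).
move=> a ha i /andP [i1 ik] v hv.
apply: claim; first lia.
have -> : (k - i.-1 = (k - i).+1)%N by lia.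
apply: Spow_cons ha _; apply: Spow_sub sub _; apply: (phi_chain (j:=i) _ hv); lia.
Qed.

Lemma psi_phi : psi k (phi f) = f.
Proof.
apply/ffunP => j; rewrite ffunE.
have fj : f j = fl f j by rewrite /fl inord_val.
have jk := ltn_ord j.
case: ifP => [/eqP j0 | j0].
  by rewrite fj j0; have [h0 _ _] := hf.
case: ifP => [/eqP jk' | jk'].
  by rewrite fj jk'; have [_ h1 _] := hf.
rewrite fj; apply: span_ofE; split.
- move=> v [s [w [sz hs ->]]].
  have [_ h1 _] := hf.
  have := phi_prod hs (i:=k) (v:=w); rewrite sz leqnn h1 memvf.
  have -> : (k - (k - j) = j)%N by lia.
  move=> /(_ _ isT isT); apply; lia.
- move=> W HW; apply/subvP => v hv; apply: HW; apply: (phi_chain (j:=j) _ hv); lia.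
Qed.

End PartA.

Lemma dim_cons_lt (x : vec) (s : seq vec) : x \notin <<s>>%VS ->
  (\dim <<s>> < \dim <<x :: s>>)%N.
Proof.
move=> xs; have := dimv_leqif_sup (addvSr <[x]> <<s>>).
rewrite span_cons => -[le eqC].
case: (boolP ((<[x]> + <<s>>)%VS <= <<s>>)%VS) => [hsub | hn].
  by case/negP: xs; apply: (subvP hsub); apply: (subvP (addvSl _ _)); apply: memv_line.
by rewrite ltn_neqAle le andbT eqC.
Qed.

Lemma span_exists (X : vec -> Prop) : exists V, is_span X V.
Proof.
pose N := \dim (fullv : {vspace vec}).
suff: forall m (s : seq vec), (forall x, x \in s -> X x) ->
    (N - \dim <<s>> <= m)%N -> exists V, is_span X V.
  by move=> /(_ N [::]); apply => //; rewrite leq_subr.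
elim => [|m IH] s hs hm.
all: case: (classic (forall x, X x -> x \in <<s>>%VS)) => [hall | hn];
  first by exists <<s>>%VS; split => // W HW; apply/span_subvP => x hx; exact: HW (hs x hx).
all: have [x hx] := not_all_ex_not _ _ hn.
all: have [Xx /negP xs] := imply_to_and _ _ hx.
all: have lt := dim_cons_lt xs.
- have : (\dim <<x :: s>> <= N)%N by apply: dimvS; apply: subvf.
  lia.
- apply: (IH (x :: s)); last lia.
  by move=> y; rewrite in_cons => /orP [/eqP -> // | ]; exact: hs.
Qed.

Lemma span_ofP (X : vec -> Prop) : is_span X (span_of X).
Proof.
have [V hV] := span_exists X; by rewrite (span_ofE hV).
Qed.

Section PartB.
Variables (k : nat) (hk : (2 <= k)%N) (S : mset F n) (hS : k_maximal S k).

Local Notation W i := (span_of (Spow S i)).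

Lemma W_mem i v : Spow S i v -> v \in W i.
Proof. exact: (span_ofP _).1. Qed.

Lemma W_min i (U : {vspace vec}) : (forall v, Spow S i v -> v \in U) -> (W i <= U)%VS.
Proof. exact: (span_ofP _).2. Qed.

Lemma W_ge i : (k <= i)%N -> W i = 0%VS.
Proof.
move=> ki; apply/eqP; rewrite -subv0; apply: W_min => v [s [w [sz hs ->]]].
have [[_ Snil _] _] := hS.
rewrite -(cat_take_drop k s) mprod_cat Snil ?mul0mx ?mem0v //.
  by rewrite size_takel // sz.
by move=> b hb; apply: hs; apply: mem_take hb.
Qed.

Lemma W0 : W 0 = fullv.
Proof. by apply/subv_anti; rewrite subvf /=; apply/subvP => v _; apply: W_mem; apply: Spow0. Qed.

Lemma W_anti i j : (i <= j)%N -> (W j <= W i)%VS.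
Proof. by move=> ij; apply: W_min => v hv; apply: W_mem; apply: Spow_le ij hv. Qed.

Lemma W_key a i x : S a -> x \in W i -> a *m x \in W i.+1.
Proof.
move=> ha hx.
have : (W i <= linfun (@mulmx F n n 1 a) @^-1: W i.+1)%VS.
  apply: W_min => y hy; rewrite -memv_preim lfunE /=.
  by apply: W_mem; apply: Spow_cons.
by move/subvP/(_ x hx); rewrite -memv_preim lfunE.
Qed.

Lemma W_strict i : (i < k)%N -> ~~ (W i <= W i.+1)%VS.
Proof.
move=> ik; apply/negP => H.
have prop : forall t, (W (i + t) <= W (i + t).+1)%VS.
  elim => [|t IH]; first by rewrite addn0.
  apply: W_min => v; rewrite addnS => /Spow_uncons [a [y [ha hy ->]]].
  by apply: W_key ha _; apply: (subvP IH); apply: W_mem.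
have up : forall t, (W i <= W (i + t))%VS.
  elim => [|t IH]; first by rewrite addn0.
  by rewrite addnS; exact: subv_trans IH (prop t).
have := up (k - i)%N; rewrite subnKC ?(ltnW ik) // (W_ge (leqnn k)) subv0 => /eqP Wi0.
have [[_ _ [s [sz hs ne]]] _] := hS.
case: (classic (forall v : vec, mprod s *m v = 0)) => [h | hn].
  by move: ne; rewrite (mx0_of_cols h) eqxx.
have [v hv] := not_all_ex_not _ _ hn; apply: hv.
have : mprod s *m v \in W k.-1 by apply: W_mem; exists s, v.
move/(subvP (W_anti (_ : i <= k.-1)%N)); rewrite Wi0 memv0 => /(_ _)/eqP; apply; lia.
Qed.

Lemma fl_psi i : (i <= k)%N -> fl (psi k S) i = W (k - i).
Proof.
move=> ik; rewrite /fl /psi ffunE inordK ?ltnS //.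
case: ifP => [/eqP -> | _]; first by rewrite subn0 W_ge.
by case: ifP => [/eqP -> | _ //]; rewrite subnn W0.
Qed.

Lemma psi_flag : is_flag (psi k S).
Proof.
split.
- by rewrite fl_psi // subn0 W_ge.
- by rewrite fl_psi // subnn W0.
- move=> i ik; rewrite !fl_psi ?(ltnW ik) //.
  have -> : (k - i = (k - i.+1).+1)%N by lia.
  split; [exact: W_anti (leqnSn _) | apply: W_strict; lia].
Qed.

Lemma S_sub_phi a : S a -> phi (psi k S) a.
Proof.
move=> ha i /andP [i1 ik] v.
have ik' : (i.-1 <= k)%N by lia.
rewrite (fl_psi ik) (fl_psi ik').
have -> : (k - i.-1 = (k - i).+1)%N by lia.
exact: W_key.
Qed.

End PartB.

End Proofs.

Theorem corollary9 (F : fieldType) (n k : nat) :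
  (1 <= n)%N -> (2 <= k)%N ->
  (forall f : flagT F n k, is_flag f ->
      k_maximal (phi f) k /\ psi k (phi f) = f) /\
  (forall S : mset F n, k_maximal S k ->
      is_flag (psi k S) /\ phi (psi k S) = S).
Proof.
move=> n1 k2; split.
- move=> f hf; split; last exact: psi_phi.
  split; [exact: phi_nil | exact: phi_max].
- move=> S hS; have hfl := psi_flag k2 hS; split => //.
  apply: functional_extensionality => a; apply: propositional_extensionality; split;
    last exact: S_sub_phi.
  move=> ha; exact: hS.2 _ (phi_nil k2 hfl) (S_sub_phi k2 hS) a ha.
Qed.
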